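(* Let $\mathcal{C}$ be an exact-repair regenerating code with parameters $\{(n,k,d)=(4,3,3),(\alpha,\beta),B\}$. If $\frac{3}{2}\beta<\alpha<3\beta$, then $$3B\le 4\alpha+6\beta .$$
   Context: An exact-repair regenerating code with parameters $\{(n,k,d),(\alpha,\beta),B\}$: a file $M$ uniformly distributed over $\mathbb{F}_q^B$ (entropies measured in units of $\log q$); node $i\in[n]$ stores $W_i$, a deterministic function of $M$, with $H(W_i)\le\alpha$; (data collection) for every $K\subseteq[n]$ with $|K|=k$, $M$ is a function of $(W_a)_{a\in K}$; (exact repair) for every node $y$ and every set $D\subseteq[n]\setminus\{y\}$ with $|D|=d$, each $x\in D$ sends helper data, a deterministic function of $W_x$ of entropy at most $\beta$, from which $W_y$ is exactly recoverable. *)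

(* Defs.v *)
From mathcomp Require Import all_boot all_algebra.
From Stdlib Require Import Reals.
Set Implicit Arguments. Unset Strict Implicit. Unset Printing Implicit Defensive.

Local Open Scope R_scope.

(* Shannon entropy, in units of log q (q = #|F|), of the random variable f M,
   where M is uniformly distributed over the finite type T. *)
Definition entropy_q (q : nat) (T U : finType) (f : T -> U) : R :=
  \big[Rplus/R0]_(u : U)
     (let c := #|[set t : T | f t == u]|%N in
      if eqn c O then R0
      else - (INR c / INR #|T|) * ln (INR c / INR #|T|) / ln (INR q)).

Definition is_ER_regen_code (F : finFieldType) (n k d B : nat) (alpha beta : R)
    (Sym Hlp : finType) (W : 'I_n -> {ffun 'I_B -> F} -> Sym) : Prop :=
  (forall i : 'I_n, entropy_q #|F| (W i) <= alpha) /\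
  (forall K : {set 'I_n}, #|K| = k ->
     forall m m' : {ffun 'I_B -> F},
       (forall a, a \in K -> W a m = W a m') -> m = m') /\
  (forall (y : 'I_n) (D : {set 'I_n}), y \notin D -> #|D| = d ->
     exists h : 'I_n -> Sym -> Hlp,
       (forall x, x \in D -> entropy_q #|F| (fun m => h x (W x m)) <= beta) /\
       (forall m m' : {ffun 'I_B -> F},
          (forall x, x \in D -> h x (W x m) = h x (W x m')) ->
          W y m = W y m')).

(* Main.v *)
Require Import Defs.
From mathcomp Require Import all_boot all_algebra.
From Stdlib Require Import Reals.
From Stdlib Require Import Lra NArith ClassicalEpsilon.
From HB Require Import structures.
Set Implicit Arguments. Unset Strict Implicit. Unset Printing Implicit Defensive.
Local Open Scope R_scope.

Lemma RplusA : associative Rplus. Proof. move=> *; lra. Qed.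
Lemma RmultA : associative Rmult. Proof. move=> *; ring. Qed.
HB.instance Definition _ := Monoid.isComLaw.Build R R0 Rplus RplusA Rplus_comm Rplus_0_l.
HB.instance Definition _ := Monoid.isComLaw.Build R R1 Rmult RmultA Rmult_comm Rmult_1_l.
HB.instance Definition _ := Monoid.isMulLaw.Build R R0 Rmult Rmult_0_l Rmult_0_r.
HB.instance Definition _ := Monoid.isAddLaw.Build R Rmult Rplus Rmult_plus_distr_r Rmult_plus_distr_l.

Notation "\rsum_ ( i <- r | P ) F" := (\big[Rplus/R0]_(i <- r | P) F)
  (at level 41, F at level 41, i, r at level 50).
Notation "\rsum_ ( i | P ) F" := (\big[Rplus/R0]_(i | P) F)
  (at level 41, F at level 41, i at level 50).
Notation "\rsum_ i F" := (\big[Rplus/R0]_i F)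
  (at level 41, F at level 41, i at level 0, right associativity).

Lemma rsum_le (I : Type) (s : seq I) (P : pred I) (F G : I -> R) :
  (forall i, P i -> F i <= G i) ->
  \big[Rplus/R0]_(i <- s | P i) F i <= \big[Rplus/R0]_(i <- s | P i) G i.
Proof. move=> H; apply: (big_ind2 (fun x y => x <= y)) => //; [lra | move=> *; lra]. Qed.

Lemma rsum_card (T : finType) (P : pred T) :
  \big[Rplus/R0]_(i | P i) 1 = INR #|P|.
Proof.
rewrite -sum1_card.
have M : {morph INR : x y / (x + y)%nat >-> x + y} by move=> x y; rewrite plus_INR.
by rewrite (big_morph _ M (erefl (INR 0))).
Qed.

Lemma rsum_card_in (T : finType) (A : {set T}) :
  \big[Rplus/R0]_(i in A) 1 = INR #|A|.
Proof.
rewrite -sum1_card.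
have M : {morph INR : x y / (x + y)%nat >-> x + y} by move=> x y; rewrite plus_INR.
by rewrite (big_morph _ M (erefl (INR 0))).
Qed.

Lemma rsum_const (T : finType) (c : R) :
  \big[Rplus/R0]_(i : T) c = INR #|T| * c.
Proof.
rewrite (eq_bigr (fun _ => 1 * c)); last by move=> *; rewrite Rmult_1_l.
by rewrite -big_distrl /= rsum_card.
Qed.

Section Count.
Variable T : finType.
Definition cnt (e : rel T) (t : T) : nat := #|[set t' | e t t']|.

Definition equivb (e : rel T) := (forall x, e x x) /\ (forall x y, e x y -> e y x) /\
  (forall x y z, e x y -> e y z -> e x z).

Lemma cnt_gt0 e t : equivb e -> (0 < cnt e t)%nat.
Proof. move=> [r _]. apply/card_gt0P; exists t; by rewrite inE r. Qed.

Lemma cntR_gt0 e t : equivb e -> 0 < INR (cnt e t).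
Proof. move=> q; apply: lt_0_INR; apply/ltP; exact: cnt_gt0. Qed.

Lemma cnt_eq e t s : equivb e -> e t s -> cnt e t = cnt e s.
Proof.
move=> [r [sy tr]] ets; rewrite /cnt; apply: eq_card => x; rewrite !inE.
apply/idP/idP => H; [apply: tr (sy _ _ ets) H | apply: tr ets H].
Qed.

Definition ind (b : bool) : R := if b then 1 else 0.

Lemma cnt_sum e t : INR (cnt e t) = \big[Rplus/R0]_s ind (e t s).
Proof.
rewrite /cnt -rsum_card big_mkcond /=; apply: eq_bigr => s _.
have := in_set (fun t' => e t t') s; rewrite /ind unfold_in /= => ->. done.
Qed.

Variables eA eB eD : rel T.
Hypotheses (qA : equivb eA) (qB : equivb eB) (qD : equivb eD).
Hypotheses (AD : forall x y, eA x y -> eD x y) (BD : forall x y, eB x y -> eD x y).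
Definition eU : rel T := fun x y => eA x y && eB x y.

Lemma qU : equivb eU.
Proof.
case: qA => [rA [sA tA]]; case: qB => [rB [sB tB]].
split; [|split] => [x|x y|x y z]; rewrite /eU ?rA ?rB //.
- by case/andP => /sA -> /sB ->.
- by case/andP => h1 h2 /andP[h3 h4]; rewrite (tA _ _ _ h1 h3) (tB _ _ _ h2 h4).
Qed.

Lemma inner s r :
  \big[Rplus/R0]_t (ind (eA t s && eB t r) / (INR (cnt eU t) * INR (cnt eD t)))
    <= ind (eD s r) / INR (cnt eD s).
Proof.
case: qA => [rA [sA tA]]; case: qB => [rB [sB tB]]; case: qD => [rD [sD tD]].
have cDp x : 0 < INR (cnt eD x) by apply: cntR_gt0.
have cUp x : 0 < INR (cnt eU x) by apply: cntR_gt0; exact: qU.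
case: (pickP (fun t => eA t s && eB t r)) => [t0 /andP[h1 h2] | none]; last first.
  rewrite big1; first by rewrite /ind; case: (eD s r); 
    [apply: Rlt_le; apply: Rdiv_lt_0_compat; [lra|apply: cDp] | rewrite /Rdiv Rmult_0_l; lra].
  by move=> t _; have := none t; rewrite /= /ind => ->; rewrite /Rdiv Rmult_0_l.
have eDsr : eD s r by apply: tD (AD (sA _ _ h1)) (BD h2).
rewrite /ind eDsr.
set P := [set t | eA t s && eB t r].
have cU0 t : eA t s && eB t r -> cnt eU t = #|P|.
  case/andP=> a1 a2; rewrite /cnt; apply: eq_card => x; rewrite !inE /eU.
  apply/idP/idP.
  - case/andP=> b1 b2; rewrite (tA _ _ _ (sA _ _ b1) a1) (tB _ _ _ (sB _ _ b2) a2) //.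
  - case/andP=> b1 b2; rewrite (tA _ _ _ a1 (sA _ _ b1)) (tB _ _ _ a2 (sB _ _ b2)) //.
have cD0 t : eA t s && eB t r -> cnt eD t = cnt eD s.
  by case/andP=> a1 _; apply: cnt_eq; [exact: qD | exact: AD a1].
have Pp : (0 < #|P|)%nat by apply/card_gt0P; exists t0; rewrite inE h1 h2.
have PR : 0 < INR #|P| by apply: lt_0_INR; apply/ltP.
rewrite (eq_bigr (fun t => (if eA t s && eB t r then 1 else 0) * / (INR #|P| * INR (cnt eD s)))).
  rewrite -big_distrl /= big_mkcond.
  rewrite (eq_bigr (fun t => if t \in P then 1 else 0)); last by move=> i _; rewrite inE.
  rewrite -big_mkcond rsum_card_in.
  right; field; split; apply: Rgt_not_eq; [apply: cDp | exact: PR].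
move=> t _; case E: (eA t s && eB t r); last by rewrite /Rdiv !Rmult_0_l.
by rewrite cU0 // cD0.
Qed.

Lemma key :
  \big[Rplus/R0]_t (INR (cnt eA t) * INR (cnt eB t) / (INR (cnt eU t) * INR (cnt eD t)))
   <= INR #|T|.
Proof.
have cDp x : 0 < INR (cnt eD x) by apply: cntR_gt0.
rewrite (eq_bigr (fun t => \big[Rplus/R0]_s \big[Rplus/R0]_r
   (ind (eA t s && eB t r) / (INR (cnt eU t) * INR (cnt eD t))))); last first.
  move=> t _; rewrite [INR (cnt eA t)]cnt_sum [INR (cnt eB t)]cnt_sum /Rdiv !big_distrl /=.
  apply: eq_bigr => s _.
  rewrite big_distrr big_distrl /=; apply: eq_bigr => r _.
  by rewrite /ind; case: (eA t s); case: (eB t r) => /=; ring.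
rewrite exchange_big /=.
under eq_bigr => s _ do rewrite exchange_big /=.
apply: Rle_trans.
  apply: rsum_le => s _; apply: rsum_le => r _; exact: inner.
rewrite (eq_bigr (fun _ => 1)); first by rewrite rsum_card; right.
move=> s _; rewrite /Rdiv -big_distrl /= -cnt_sum.
by field; apply: Rgt_not_eq; apply: cDp.
Qed.

Definition Lsum (e : rel T) := \big[Rplus/R0]_t ln (INR (cnt e t)).

Lemma Lsub : Lsum eA + Lsum eB <= Lsum eU + Lsum eD.
Proof.
have cp e t : equivb e -> 0 < INR (cnt e t) by move=> q; apply: cntR_gt0.
have pA t := cp _ t qA; have pB t := cp _ t qB; have pD t := cp _ t qD.
have pU t := cp _ t qU.
have H1 : \big[Rplus/R0]_t (ln (INR (cnt eA t)) + ln (INR (cnt eB t))) <=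
  \big[Rplus/R0]_t (ln (INR (cnt eU t)) + ln (INR (cnt eD t)) +
     (INR (cnt eA t) * INR (cnt eB t) / (INR (cnt eU t) * INR (cnt eD t))) + (-1)).
  apply: rsum_le => t _.
  set x := INR (cnt eA t) * INR (cnt eB t) / (INR (cnt eU t) * INR (cnt eD t)).
  have xp : 0 < x.
    rewrite /x /Rdiv; apply: Rmult_lt_0_compat; first by apply: Rmult_lt_0_compat.
    by apply: Rinv_0_lt_compat; apply: Rmult_lt_0_compat.
  have lx : ln x = ln (INR (cnt eA t)) + ln (INR (cnt eB t)) - ln (INR (cnt eU t)) - ln (INR (cnt eD t)).
    rewrite /x /Rdiv ln_mult; last by apply: Rinv_0_lt_compat; apply: Rmult_lt_0_compat.
      rewrite ln_mult // ln_Rinv; last by apply: Rmult_lt_0_compat.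
      rewrite ln_mult //; ring.
    by apply: Rmult_lt_0_compat.
  have := exp_ineq1_le (ln x); rewrite exp_ln //; lra.
rewrite !big_split /= in H1.
have K := key; rewrite rsum_const in H1.
rewrite /Lsum; lra.
Qed.

End Count.

Lemma entropy_conv (q : nat) (T U : finType) (f : T -> U) :
  (0 < #|T|)%nat -> (1 < q)%nat ->
  entropy_q q f = (INR #|T| * ln (INR #|T|) -
     \big[Rplus/R0]_t ln (INR #|[set t' | f t' == f t]|)) / (INR #|T| * ln (INR q)).
Proof.
move=> Tp q1.
have lq : 0 < ln (INR q).
  rewrite -ln_1; apply: ln_increasing; first lra.
  by apply: lt_1_INR; apply/ltP.
have NP : 0 < INR #|T| by apply: lt_0_INR; apply/ltP.
set c := fun u => #|[set t : T | f t == u]|.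
have part (G : U -> R) : \big[Rplus/R0]_t G (f t) = \big[Rplus/R0]_u (INR (c u) * G u).
  rewrite (partition_big f xpredT) //=; apply: eq_bigr => u _.
  rewrite (eq_bigr (fun _ => 1 * G u)); last by move=> t /eqP ->; ring.
  rewrite -big_distrl /=; congr (_ * _).
  rewrite -rsum_card_in /c; apply: eq_bigl => t; by rewrite inE.
have sumc : \big[Rplus/R0]_u INR (c u) = INR #|T|.
  have P1 := part (fun _ => 1); rewrite /= rsum_const Rmult_1_r in P1.
  by rewrite P1; apply: eq_bigr => u _; ring.
have -> : \big[Rplus/R0]_t ln (INR #|[set t' | f t' == f t]|) =
          \big[Rplus/R0]_u (INR (c u) * ln (INR (c u))) by rewrite -part.
rewrite /entropy_q /Rdiv.
rewrite (eq_bigr (fun u => (INR (c u) * ln (INR #|T|) - INR (c u) * ln (INR (c u))) *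
     / (INR #|T| * ln (INR q)))); last first.
  move=> u _; rewrite /= -/(c u).
  case: (eqnP) => [-> | /eqP cu]; first by rewrite /= !Rmult_0_l /Rminus Ropp_0 Rplus_0_l Rmult_0_l.
  have cp : 0 < INR (c u) by apply: lt_0_INR; apply/ltP; rewrite lt0n.
  rewrite ln_mult //; last by apply: Rinv_0_lt_compat.
  rewrite ln_Rinv //; field; split; apply: Rgt_not_eq => //.
rewrite -big_distrl /=; congr (_ * _).
rewrite (eq_bigr (fun u => INR (c u) * ln (INR #|T|) + (- (INR (c u) * ln (INR (c u))))));
  last by move=> *; rewrite /Rminus.
rewrite big_split /= -big_distrl /= sumc.
have M : {morph Ropp : x y / x + y} by move=> x y; rewrite Ropp_plus_distr.
have O : - R0 = R0 by lra.
by rewrite -(big_morph _ M O).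
Qed.

Definition memN (a : N) (n : nat) : bool := N.testbit a (N.of_nat n).
Definition build (f : nat -> bool) : N :=
  foldr (fun k acc => if f k then N.setbit acc (N.of_nat k) else acc) N0 (iota 0 20).

Lemma build_gen f (l : seq nat) n :
  memN (foldr (fun k acc => if f k then N.setbit acc (N.of_nat k) else acc) N0 l) n =
  (n \in l) && f n.
Proof.
elim: l => [|k l IH] //=.
rewrite inE; case: (eqVneq n k) => [E | nk] /=.
  subst n; case fk: (f k); first by rewrite /memN N.setbit_eq.
  by rewrite IH fk andbF.
case: (f k); last by rewrite IH.
rewrite /memN N.setbit_neq; first by rewrite -/(memN _ n) IH.
by move=> /Nat2N.inj E; move: nk; rewrite E eqxx.
Qed.

Lemma build_spec f n : (n < 20)%nat -> memN (build f) n = f n.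
Proof. by move=> H; rewrite /build build_gen mem_iota /= H. Qed.

Definition threeW (P : nat -> bool) :=
  [|| [&& P 0%nat, P 1%nat & P 2%nat], [&& P 0%nat, P 1%nat & P 3%nat],
      [&& P 0%nat, P 2%nat & P 3%nat] | [&& P 1%nat, P 2%nat & P 3%nat]].
Definition derived (P : nat -> bool) (n : nat) :=
  threeW P || (if (n < 4)%nat then all (fun x => (x == n) || P (4 + 4*x + n)%nat) (iota 0 4)
              else P ((n-4) %/ 4)%nat).
Definition onestep (P : nat -> bool) n := P n || derived P n.
Definition stepN (a : N) := build (onestep (memN a)).
Definition closN (a : N) := stepN (stepN (stepN (stepN (stepN (stepN a))))).

Definition img (s : seq nat) (n : nat) : nat :=
  if (n < 4)%nat then nth 0%nat s n
  else (4 + 4 * nth 0%nat s ((n-4) %/ 4) + nth 0%nat s ((n-4) %% 4))%nat.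
Definition app (s : seq nat) (a : N) : N :=
  build (fun n => has (fun k => memN a k && (img s k == n)) (iota 0 20)).
Definition perms : seq (seq nat) := permutations [:: 0; 1; 2; 3]%nat.
Definition chk_sub (a b c d : N) :=
  let cu := closN (N.lor a b) in
  all (fun n => [&& memN d n == (memN a n && memN b n),
                    (memN a n || memN b n) ==> memN c n &
                    memN c n ==> memN cu n]) (iota 0 20).
Definition chk_le (a b : N) := all (fun n => memN a n ==> memN b n) (iota 0 20).
Definition chk_cl (a c : N) := chk_le a c && chk_le c (closN a).
Definition isW (a : N) :=
  has (fun w => all (fun n => memN a n == (n == w)) (iota 0 20)) (iota 0 4).
Definition isS (a : N) :=
  has (fun p => (p %/ 4 != p %% 4) && all (fun n => memN a n == (n == 4 + p)%nat) (iota 0 20))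
      (iota 0 16).
Definition is0 (a : N) := all (fun n => ~~ memN a n) (iota 0 20).

Lemma allI (f : nat -> bool) : all f (iota 0 20) -> forall i : 'I_20, f i.
Proof. by move/allP => H i; apply: H; rewrite mem_iota /= ltn_ord. Qed.

Section Code.
Variables (F : finFieldType) (B : nat) (Sym Hlp : finType).
Variable W : 'I_4 -> {ffun 'I_B -> F} -> Sym.
Variable hh : 'I_4 -> 'I_4 -> Sym -> Hlp.
Notation T := {ffun 'I_B -> F}.
Hypothesis DC : forall K : {set 'I_4}, #|K| = 3%nat ->
  forall m m' : T, (forall a, a \in K -> W a m = W a m') -> m = m'.
Hypothesis REP : forall (y : 'I_4) (m m' : T),
  (forall x : 'I_4, x != y -> hh y x (W x m) = hh y x (W x m')) -> W y m = W y m'.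

Definition V (i : 'I_20) (t : T) : Sym + Hlp :=
  if (i < 4)%nat then inl (W (inord i) t)
  else inr (hh (inord ((i-4) %% 4)) (inord ((i-4) %/ 4)) (W (inord ((i-4) %/ 4)) t)).

Definition eP (P : nat -> bool) : rel T :=
  fun t t' => [forall i : 'I_20, P i ==> (V i t == V i t')].

Lemma ePP (P : nat -> bool) t t' : reflect (forall i : 'I_20, P (i : nat) -> V i t = V i t') (eP P t t').
Proof.
apply: (iffP forallP) => H i.
  by move=> Pi; apply/eqP; move: (H i); rewrite Pi.
by apply/implyP => /H ->.
Qed.

Lemma eP_equiv (P : nat -> bool) : equivb (eP P).
Proof.
split; [|split].
- by move=> x; apply/ePP.
- by move=> x y /ePP H; apply/ePP => i /H ->.
- by move=> x y z /ePP H1 /ePP H2; apply/ePP => i Pi; rewrite H1 // H2.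
Qed.

Definition wi (a : 'I_4) : 'I_20 := widen_ord (isT : (4 <= 20)%nat) a.
Lemma si_lt (x y : 'I_4) : (4 + 4 * x + y < 20)%nat.
Proof. by case: x => [[|[|[|[|]]]]] //= _; case: y => [[|[|[|[|]]]]]. Qed.
Definition si (x y : 'I_4) : 'I_20 := Ordinal (si_lt x y).

Lemma V_wi a t : V (wi a) t = inl (W a t).
Proof. by rewrite /V /= ltn_ord inord_val. Qed.

Lemma V_si x y t : V (si x y) t = inr (hh y x (W x t)).
Proof.
rewrite /V /=.
have E : (4 + 4 * x + y - 4 = x * 4 + y)%nat by rewrite -addnA addKn mulnC.
rewrite E modnMDl divnMDl // divn_small // addn0 modn_small //.
by rewrite !inord_val.
Qed.

Lemma threeW_eq (P : nat -> bool) t t' : threeW P -> eP P t t' -> t = t'.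
Proof.
move=> tw /ePP H.
have key (d : 'I_4) : (forall a : 'I_4, a != d -> P a) -> t = t'.
  move=> Pd; apply: (DC (K := [set~ d])).
    by rewrite cardsC1 card_ord.
  move=> a; rewrite in_setC1 => ad.
  have := H (wi a) (Pd a ad); rewrite !V_wi; by case.
case/or4P: tw => /and3P [h1 h2 h3].
- by apply: (key (Ordinal (isT : (3 < 4)%nat))) => [[[|[|[|[|]]]]]].
- by apply: (key (Ordinal (isT : (2 < 4)%nat))) => [[[|[|[|[|]]]]]].
- by apply: (key (Ordinal (isT : (1 < 4)%nat))) => [[[|[|[|[|]]]]]].
- by apply: (key (Ordinal (isT : (0 < 4)%nat))) => [[[|[|[|[|]]]]]].
Qed.

Lemma onestep_ok (P : nat -> bool) t t' : eP P t t' -> eP (onestep P) t t'.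
Proof.
move=> H; have H' := H; move/ePP: H' => H'; apply/ePP => i.
rewrite /onestep /derived; case/orP => [Pi | /orP [tw | ]]; first exact: H'.
  by rewrite (threeW_eq tw H).
case: ifP => i4.
  move=> /allP cond; set y : 'I_4 := Ordinal i4.
  have Wy : W y t = W y t'.
    apply: REP => x xy.
    have Px : P (4 + 4 * x + y)%nat.
      have := cond x; rewrite mem_iota /= ltn_ord => /(_ isT) /orP [|//].
      by move=> /eqP E; move: xy; rewrite (_ : x = y) ?eqxx //; apply: val_inj.
    by have := H' (si x y) Px; rewrite !V_si; case.
  by rewrite (_ : i = wi y) ?V_wi ?Wy //; apply: val_inj.
move=> Px.
have x4 : ((i - 4) %/ 4 < 4)%nat.
  by rewrite ltn_divLR // ltn_subLR ?(ltnW (ltn_ord i)) //; move/negbT: i4; rewrite -leqNgt.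
set x : 'I_4 := Ordinal x4.
have Wx : W x t = W x t' by have := H' (wi x) Px; rewrite !V_wi; case.
rewrite /V i4 (_ : inord ((i - 4) %/ 4) = x) ?Wx //.
by apply: val_inj; rewrite /= inordK.
Qed.

Lemma stepN_ok a t t' : eP (memN a) t t' -> eP (memN (stepN a)) t t'.
Proof.
move=> /onestep_ok /ePP H; apply/ePP => i; rewrite /stepN build_spec //; exact: H.
Qed.

Lemma closN_ok a t t' : eP (memN a) t t' -> eP (memN (closN a)) t t'.
Proof. by move=> H; do 6 apply: stepN_ok. Qed.

Lemma ln_le' a b : 0 < a -> a <= b -> ln a <= ln b.
Proof. move=> a0 [ab|->]; [left; exact: ln_increasing | right; done]. Qed.

Lemma Tpos : (0 < #|T|)%nat.
Proof. by apply/card_gt0P; exists [ffun => @GRing.zero F]. Qed.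

Lemma Fgt1 : (1 < #|F|)%nat.
Proof.
apply/card_gt1P; exists (@GRing.zero F), (@GRing.one F); split => //.
by rewrite eq_sym GRing.oner_neq0.
Qed.

Lemma NR : 0 < INR #|T|.
Proof. by apply: lt_0_INR; apply/ltP; exact: Tpos. Qed.

Lemma lnq : 0 < ln (INR #|F|).
Proof.
rewrite -ln_1; apply: ln_increasing; first lra.
by apply: lt_1_INR; apply/ltP; exact: Fgt1.
Qed.

Lemma kpos : 0 < INR #|T| * ln (INR #|F|).
Proof. apply: Rmult_lt_0_compat; [exact: NR | exact: lnq]. Qed.

Definition Lp (P : nat -> bool) := Lsum (eP P).
Definition hq (P : nat -> bool) :=
  (INR #|T| * ln (INR #|T|) - Lp P) / (INR #|T| * ln (INR #|F|)).

Lemma hq_le_of P Q : Lp Q <= Lp P -> hq P <= hq Q.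
Proof.
move=> H; rewrite /hq /Rdiv; apply: Rmult_le_compat_r; last lra.
by apply: Rlt_le; apply: Rinv_0_lt_compat; exact: kpos.
Qed.

Lemma hq_sub (P Q : nat -> bool) :
  hq (fun n => P n || Q n) + hq (fun n => P n && Q n) <= hq P + hq Q.
Proof.
have L := Lsub (eP_equiv P) (eP_equiv Q) (eP_equiv (fun n => P n && Q n)).
have AD : forall x y, eP P x y -> eP (fun n => P n && Q n) x y.
  by move=> x y /ePP H; apply/ePP => i /andP [Pi _]; apply: H.
have BD : forall x y, eP Q x y -> eP (fun n => P n && Q n) x y.
  by move=> x y /ePP H; apply/ePP => i /andP [_ Qi]; apply: H.
have {}L := L AD BD.
have E : Lsum (eU (eP P) (eP Q)) = Lp (fun n => P n || Q n).
  rewrite /Lsum /Lp /Lsum; apply: eq_bigr => t _; congr (ln (INR _)).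
  rewrite /cnt; apply: eq_card => x; rewrite !inE /eU.
  apply/idP/idP.
    by case/andP => /ePP H1 /ePP H2; apply/ePP => i /orP [/H1|/H2].
  by move=> /ePP H; apply/andP; split; apply/ePP => i Hi; apply: H; rewrite Hi ?orbT.
rewrite E in L.
have k := kpos; have ik : 0 <= / (INR #|T| * ln (INR #|F|)).
  by apply: Rlt_le; apply: Rinv_0_lt_compat.
rewrite /hq /Rdiv -!Rmult_plus_distr_r; apply: Rmult_le_compat_r => //.
rewrite /Lp in L |- *; lra.
Qed.

Lemma hq_ext (P Q : nat -> bool) : (forall i : 'I_20, P i = Q i) -> hq P = hq Q.
Proof.
move=> H; rewrite /hq /Lp /Lsum; congr ((_ - _) / _).
apply: eq_bigr => t _; congr (ln (INR _)); rewrite /cnt; apply: eq_card => x.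
by rewrite !inE /eP; apply: eq_forallb => i; rewrite H.
Qed.

Lemma hq_impl (P Q : nat -> bool) :
  (forall t t', eP P t t' -> eP Q t t') -> hq Q <= hq P.
Proof.
move=> H; apply: hq_le_of; rewrite /Lp /Lsum; apply: rsum_le => t _.
apply: ln_le'; first by apply: cntR_gt0; exact: eP_equiv.
apply: le_INR; apply/leP; apply: subset_leq_card; apply/subsetP => x.
by rewrite !inE; apply: H.
Qed.

Lemma hq_mono (P Q : nat -> bool) : (forall i : 'I_20, P i -> Q i) -> hq P <= hq Q.
Proof. by move=> H; apply: hq_impl => t t' /ePP H'; apply/ePP => i /H /H'. Qed.

Lemma hq_empty : hq (fun _ => false) = 0.
Proof.
rewrite /hq /Lp /Lsum (eq_bigr (fun _ => ln (INR #|T|))).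
  by rewrite rsum_const /Rdiv Rminus_diag Rmult_0_l.
move=> t _; congr (ln (INR _)); rewrite /cnt -cardsT; apply: eq_card => x.
by rewrite !inE; apply/forallP.
Qed.

Lemma hq_ge0 P : 0 <= hq P.
Proof. rewrite -hq_empty; exact: hq_mono. Qed.

Lemma INR_expn m n : INR (expn m n) = INR m ^ n.
Proof. elim: n => [|n IH]; first by rewrite expn0. by rewrite expnS mult_INR IH. Qed.

Lemma hq_three (P : nat -> bool) : threeW P -> hq P = INR B.
Proof.
move=> tw; rewrite /hq /Lp /Lsum (eq_bigr (fun _ => 0)); last first.
  move=> t _; rewrite -ln_1; congr (ln _); rewrite /cnt (_ : [set t' | eP P t t'] = [set t]).
    by rewrite cards1.
  apply/setP => x; rewrite !inE; apply/idP/idP => [/(threeW_eq tw) -> //| /eqP ->].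
  by case: (eP_equiv P) => r _; apply: r.
rewrite rsum_const Rmult_0_r Rminus_0_r.
rewrite card_ffun card_ord INR_expn ln_pow; last by apply: lt_0_INR; apply/ltP; apply: ltnW; exact: Fgt1.
have := lnq; have := NR; rewrite card_ffun card_ord INR_expn => n0 l0.
move: n0 l0; set u := INR #|F| ^ B; set v := ln (INR #|F|); set w := INR B => n0 l0.
field; split; apply: Rgt_not_eq => //.
Qed.

Lemma hq_W (a : 'I_4) : hq (fun n => n == a) = entropy_q #|F| (W a).
Proof.
rewrite (entropy_conv _ Tpos Fgt1) /hq /Lp /Lsum; congr ((_ - _) / _).
apply: eq_bigr => t _; congr (ln (INR _)); rewrite /cnt; apply: eq_card => x.
rewrite !inE; apply/idP/idP.
  move=> /ePP H; have := H (wi a) (eqxx _); rewrite !V_wi => -[->]; done.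
move=> /eqP E; apply/ePP => i /eqP ia.
by rewrite (_ : i = wi a) ?V_wi ?E //; apply: val_inj.
Qed.

Lemma hq_S (x y : 'I_4) :
  hq (fun n => n == (4 + 4 * x + y)%nat) = entropy_q #|F| (fun m => hh y x (W x m)).
Proof.
rewrite (entropy_conv _ Tpos Fgt1) /hq /Lp /Lsum; congr ((_ - _) / _).
apply: eq_bigr => t _; congr (ln (INR _)); rewrite /cnt; apply: eq_card => z.
rewrite !inE; apply/idP/idP.
  move=> /ePP H; have := H (si x y) (eqxx _); rewrite !V_si => -[->]; done.
move=> /eqP E; apply/ePP => i /eqP ia.
by rewrite (_ : i = si x y) ?V_si ?E //; apply: val_inj.
Qed.

Definition hm (a : N) := hq (memN a).

Lemma hm_sub a b c d : chk_sub a b c d -> hm c + hm d <= hm a + hm b.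
Proof.
move=> /allI H.
have Hd : hm d = hq (fun n => memN a n && memN b n).
  by apply: hq_ext => i; have /and3P [/eqP -> _ _] := H i.
have Hu : hq (memN (N.lor a b)) = hq (fun n => memN a n || memN b n).
  by apply: hq_ext => i; rewrite /memN N.lor_spec.
have Hc : hm c = hq (fun n => memN a n || memN b n).
  apply: Rle_antisym.
    rewrite -Hu; apply: hq_impl => t t' /closN_ok /ePP E; apply/ePP => i ci.
    by apply: E; have /and3P [_ _ /implyP] := H i; apply.
  apply: hq_mono => i abi; by have /and3P [_ /implyP /(_ abi) ? _] := H i.
rewrite Hc Hd; exact: hq_sub.
Qed.

Lemma hm_le a b : chk_le a b -> hm a <= hm b.
Proof. by move=> /allI H; apply: hq_mono => i; move/implyP: (H i). Qed.

Lemma hm_cl a c : chk_cl a c -> hm c = hm a.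
Proof.
case/andP => H1 /allI H2; apply: Rle_antisym; last exact: hm_le.
apply: hq_impl => t t' /closN_ok /ePP E; apply/ePP => i ci.
by apply: E; move/implyP: (H2 i); apply.
Qed.

Lemma hm_W (al : R) a : (forall i, entropy_q #|F| (W i) <= al) -> isW a -> hm a <= al.
Proof.
move=> Hal /hasP [w w4 /allI H]; move: w4; rewrite mem_iota add0n => /andP [_ w4].
have -> : hm a = hq (fun n => n == (Ordinal w4 : nat)) by apply: hq_ext => i; apply/eqP; apply: H.
by rewrite hq_W.
Qed.

Lemma hm_S (be : R) a :
  (forall (y x : 'I_4), x != y -> entropy_q #|F| (fun m => hh y x (W x m)) <= be) ->
  isS a -> hm a <= be.
Proof.
move=> Hbe /hasP [p p16 /andP [xy /allI H]]; move: p16; rewrite mem_iota add0n => /andP [_ p16].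
have x4 : (p %/ 4 < 4)%nat by rewrite ltn_divLR.
have y4 : (p %% 4 < 4)%nat by rewrite ltn_mod.
set x : 'I_4 := Ordinal x4; set y : 'I_4 := Ordinal y4.
have -> : hm a = hq (fun n => n == (4 + 4 * x + y)%nat).
  apply: hq_ext => i; rewrite /= (mulnC 4%nat) -addnA -divn_eq; apply/eqP; apply: H.
rewrite hq_S; apply: Hbe; apply/negP => /eqP E; move: xy; have /= -> := congr1 val E; by rewrite eqxx.
Qed.

Lemma hm_3 a : threeW (memN a) -> hm a = INR B.
Proof. exact: hq_three. Qed.

Lemma hm_0 a : is0 a -> hm a = 0.
Proof. by move=> /allI H; rewrite -hq_empty; apply: hq_ext => i; apply/negbTE. Qed.

Definition gl (l : seq (seq nat)) (a : N) := \big[Rplus/R0]_(s <- l) hm (app s a).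

Lemma g_sub l a b c d :
  all (fun s => chk_sub (app s a) (app s b) (app s c) (app s d)) l ->
  gl l c + gl l d <= gl l a + gl l b.
Proof.
elim: l => [|s l IH] /=; first by rewrite /gl !big_nil; lra.
case/andP => h1 h2; rewrite /gl !big_cons.
have := hm_sub h1; have := IH h2; rewrite /gl; lra.
Qed.

Lemma g_le l a b : all (fun s => chk_le (app s a) (app s b)) l -> gl l a <= gl l b.
Proof.
elim: l => [|s l IH] /=; first by rewrite /gl !big_nil; lra.
case/andP => h1 h2; rewrite /gl !big_cons.
have := hm_le h1; have := IH h2; rewrite /gl; lra.
Qed.

Lemma g_cl l a c : all (fun s => chk_cl (app s a) (app s c)) l -> gl l c = gl l a.
Proof.
elim: l => [|s l IH] /=; first by rewrite /gl !big_nil.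
case/andP => h1 h2; rewrite /gl !big_cons.
have := hm_cl h1; have := IH h2; rewrite /gl => -> ->; done.
Qed.

Lemma g_W (al : R) l a : (forall i, entropy_q #|F| (W i) <= al) ->
  all (fun s => isW (app s a)) l -> gl l a <= INR (size l) * al.
Proof.
move=> Hal; elim: l => [|s l IH]; first by rewrite /gl !big_nil /=; lra.
rewrite [all _ (_ :: _)]/= => /andP [h1 h2]; rewrite /gl !big_cons [size _]/= S_INR.
have := hm_W Hal h1; have := IH h2; rewrite /gl; lra.
Qed.

Lemma g_S (be : R) l a :
  (forall (y x : 'I_4), x != y -> entropy_q #|F| (fun m => hh y x (W x m)) <= be) ->
  all (fun s => isS (app s a)) l -> gl l a <= INR (size l) * be.
Proof.
move=> Hbe; elim: l => [|s l IH]; first by rewrite /gl !big_nil /=; lra.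
rewrite [all _ (_ :: _)]/= => /andP [h1 h2]; rewrite /gl !big_cons [size _]/= S_INR.
have := hm_S Hbe h1; have := IH h2; rewrite /gl; lra.
Qed.

Lemma g_3 l a : all (fun s => threeW (memN (app s a))) l -> gl l a = INR (size l) * INR B.
Proof.
elim: l => [|s l IH]; first by rewrite /gl !big_nil /=; lra.
rewrite [all _ (_ :: _)]/= => /andP [h1 h2]; rewrite /gl !big_cons [size _]/= S_INR.
have := hm_3 h1; have := IH h2; rewrite /gl => -> ->; ring.
Qed.

Lemma g_0 l a : all (fun s => is0 (app s a)) l -> gl l a = 0.
Proof.
elim: l => [|s l IH] /=; first by rewrite /gl !big_nil.
case/andP => h1 h2; rewrite /gl !big_cons.
have := hm_0 h1; have := IH h2; rewrite /gl => -> ->; ring.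
Qed.

Lemma g_ge0 l a : 0 <= gl l a.
Proof.
rewrite /gl; elim: l => [|s l IH]; first by rewrite big_nil; lra.
rewrite big_cons; have := hq_ge0 (memN (app s a)); rewrite -/(hm _); lra.
Qed.

Lemma g_inv l a b :
  perm_eq [seq app s a | s <- l] [seq app s b | s <- l] -> gl l a = gl l b.
Proof.
move=> H; rewrite /gl -(big_map (app^~ a) xpredT hm) -(big_map (app^~ b) xpredT hm).
exact: perm_big.
Qed.

End Code.

Theorem mainTheorem5 (F : finFieldType) (B : nat) (alpha beta : R)
    (Sym Hlp : finType) (W : 'I_4 -> {ffun 'I_B -> F} -> Sym) :
  @is_ER_regen_code F 4 3 3 B alpha beta Sym Hlp W ->
  (3 / 2 * beta < alpha)%R -> (alpha < 3 * beta)%R ->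
  (3 * INR B <= 4 * alpha + 6 * beta)%R.
Proof.
move=> [Hst [Hdc Hrep]] _ _.
have Hrep' : forall y : 'I_4, exists h : 'I_4 -> Sym -> Hlp,
   (forall x, x \in [set x | x != y] -> entropy_q #|F| (fun m => h x (W x m)) <= beta) /\
   (forall m m', (forall x, x \in [set x | x != y] -> h x (W x m) = h x (W x m')) ->
      W y m = W y m').
  move=> y; apply: Hrep; first by rewrite inE eqxx.
  have -> : [set x | x != y] = [set~ y] by apply/setP => x; rewrite !inE.
  by rewrite cardsC1 card_ord.
pose hh y := proj1_sig (constructive_indefinite_description _ (Hrep' y)).
have Hh y := proj2_sig (constructive_indefinite_description _ (Hrep' y)).
have DC : forall K : {set 'I_4}, #|K| = 3%nat ->
  forall m m' : {ffun 'I_B -> F}, (forall a, a \in K -> W a m = W a m') -> m = m'.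
  exact: Hdc.
have REP : forall (y : 'I_4) (m m' : {ffun 'I_B -> F}),
  (forall x : 'I_4, x != y -> hh y x (W x m) = hh y x (W x m')) -> W y m = W y m'.
  move=> y m m' H; case: (Hh y) => _ H2; apply: H2 => x; rewrite inE; exact: H.
have Hbe : forall (y x : 'I_4), x != y -> entropy_q #|F| (fun m => hh y x (W x m)) <= beta.
  move=> y x xy; case: (Hh y) => H1 _; apply: H1; by rewrite inE.
have S24 : INR (size perms) = 24 by rewrite (_ : size perms = 24%nat) //=; lra.
have X1 := @g_sub _ _ _ _ W hh DC REP perms 5345%num 46500%num 46565%num 5280%num (ltac:(by vm_compute)).
have X2 := @g_sub _ _ _ _ W hh DC REP perms 1249%num 33984%num 34017%num 1216%num (ltac:(by vm_compute)).
have X3 := @g_sub _ _ _ _ W hh DC REP perms 73187%num 113700%num 507375%num 72736%num (ltac:(by vm_compute)).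
have X4 := @g_sub _ _ _ _ W hh DC REP perms 5345%num 136416%num 136417%num 5344%num (ltac:(by vm_compute)).
have X5 := @g_sub _ _ _ _ W hh DC REP perms 481%num 303520%num 303585%num 416%num (ltac:(by vm_compute)).
have X6 := @g_sub _ _ _ _ W hh DC REP perms 32%num 139264%num 142626%num 0%num (ltac:(by vm_compute)).
have X7 := @g_sub _ _ _ _ W hh DC REP perms 7554%num 46464%num 507375%num 5504%num (ltac:(by vm_compute)).
have X8 := @g_sub _ _ _ _ W hh DC REP perms 71137%num 310598%num 507375%num 5440%num (ltac:(by vm_compute)).
have X9 := @g_sub _ _ _ _ W hh DC REP perms 1216%num 37952%num 38080%num 1088%num (ltac:(by vm_compute)).
have X10 := @g_sub _ _ _ _ W hh DC REP perms 32%num 8192%num 8224%num 0%num (ltac:(by vm_compute)).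
have X11 := @g_sub _ _ _ _ W hh DC REP perms 5345%num 132320%num 136417%num 1248%num (ltac:(by vm_compute)).
have X12 := @g_sub _ _ _ _ W hh DC REP perms 7554%num 212096%num 212451%num 7296%num (ltac:(by vm_compute)).
have X13 := @g_sub _ _ _ _ W hh DC REP perms 352%num 36096%num 36192%num 256%num (ltac:(by vm_compute)).
have X14 := @g_sub _ _ _ _ W hh DC REP perms 1504%num 132544%num 132576%num 1472%num (ltac:(by vm_compute)).
have X15 := @g_sub _ _ _ _ W hh DC REP perms 1505%num 38368%num 38369%num 1504%num (ltac:(by vm_compute)).
have X16 := @g_sub _ _ _ _ W hh DC REP perms 76256%num 77152%num 77280%num 76128%num (ltac:(by vm_compute)).
have X17 := @g_sub _ _ _ _ W hh DC REP perms 5504%num 38016%num 38272%num 5248%num (ltac:(by vm_compute)).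
have X18 := @g_sub _ _ _ _ W hh DC REP perms 225%num 76000%num 76001%num 224%num (ltac:(by vm_compute)).
have X19 := @g_sub _ _ _ _ W hh DC REP perms 1120%num 70720%num 70752%num 1088%num (ltac:(by vm_compute)).
have X20 := @g_sub _ _ _ _ W hh DC REP perms 7360%num 133344%num 138464%num 2240%num (ltac:(by vm_compute)).
have X21 := @g_sub _ _ _ _ W hh DC REP perms 81088%num 212096%num 212160%num 81024%num (ltac:(by vm_compute)).
have X22 := @g_sub _ _ _ _ W hh DC REP perms 4577%num 131552%num 135649%num 480%num (ltac:(by vm_compute)).
have X23 := @g_sub _ _ _ _ W hh DC REP perms 5345%num 15778%num 15843%num 5280%num (ltac:(by vm_compute)).
have X24 := @g_sub _ _ _ _ W hh DC REP perms 73187%num 103649%num 507375%num 70881%num (ltac:(by vm_compute)).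
have X25 := @g_sub _ _ _ _ W hh DC REP perms 70113%num 70881%num 71137%num 69857%num (ltac:(by vm_compute)).
have X26 := @g_sub _ _ _ _ W hh DC REP perms 4577%num 136608%num 136673%num 4512%num (ltac:(by vm_compute)).
have X27 := @g_sub _ _ _ _ W hh DC REP perms 4577%num 169376%num 169441%num 4512%num (ltac:(by vm_compute)).
have X28 := @g_sub _ _ _ _ W hh DC REP perms 5280%num 7200%num 7328%num 5152%num (ltac:(by vm_compute)).
have X29 := @g_sub _ _ _ _ W hh DC REP perms 5600%num 38272%num 38368%num 5504%num (ltac:(by vm_compute)).
have X30 := @g_sub _ _ _ _ W hh DC REP perms 96%num 459816%num 507375%num 32%num (ltac:(by vm_compute)).
have X31 := @g_sub _ _ _ _ W hh DC REP perms 320%num 98368%num 98624%num 64%num (ltac:(by vm_compute)).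
have X32 := @g_sub _ _ _ _ W hh DC REP perms 71137%num 138656%num 204257%num 5536%num (ltac:(by vm_compute)).
have X33 := @g_sub _ _ _ _ W hh DC REP perms 1249%num 74944%num 74977%num 1216%num (ltac:(by vm_compute)).
have X34 := @g_sub _ _ _ _ W hh DC REP perms 5280%num 111748%num 111780%num 5248%num (ltac:(by vm_compute)).
have X35 := @g_sub _ _ _ _ W hh DC REP perms 6336%num 268416%num 268480%num 6272%num (ltac:(by vm_compute)).
have X36 := @g_sub _ _ _ _ W hh DC REP perms 5536%num 138626%num 138658%num 5504%num (ltac:(by vm_compute)).
have X37 := @g_sub _ _ _ _ W hh DC REP perms 225%num 10400%num 10465%num 160%num (ltac:(by vm_compute)).
have X38 := @g_sub _ _ _ _ W hh DC REP perms 1472%num 132480%num 132544%num 1408%num (ltac:(by vm_compute)).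
have X39 := @g_sub _ _ _ _ W hh DC REP perms 7393%num 138432%num 138465%num 7360%num (ltac:(by vm_compute)).
have X40 := @g_sub _ _ _ _ W hh DC REP perms 73187%num 146915%num 212451%num 7651%num (ltac:(by vm_compute)).
have X41 := @g_sub _ _ _ _ W hh DC REP perms 5152%num 102432%num 103456%num 4128%num (ltac:(by vm_compute)).
have X42 := @g_sub _ _ _ _ W hh DC REP perms 76001%num 338016%num 338145%num 75872%num (ltac:(by vm_compute)).
have X43 := @g_sub _ _ _ _ W hh DC REP perms 7328%num 268448%num 269472%num 6304%num (ltac:(by vm_compute)).
have X44 := @g_sub _ _ _ _ W hh DC REP perms 4577%num 136640%num 136673%num 4544%num (ltac:(by vm_compute)).
have X45 := @g_sub _ _ _ _ W hh DC REP perms 71137%num 136672%num 202209%num 5600%num (ltac:(by vm_compute)).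
have X46 := @g_sub _ _ _ _ W hh DC REP perms 71137%num 208355%num 212451%num 67041%num (ltac:(by vm_compute)).
have X47 := @g_sub _ _ _ _ W hh DC REP perms 4577%num 5536%num 5601%num 4512%num (ltac:(by vm_compute)).
have X48 := @g_sub _ _ _ _ W hh DC REP perms 5345%num 136544%num 136673%num 5216%num (ltac:(by vm_compute)).
have X49 := @g_sub _ _ _ _ W hh DC REP perms 73187%num 109922%num 507375%num 68962%num (ltac:(by vm_compute)).
have X50 := @g_sub _ _ _ _ W hh DC REP perms 480%num 34048%num 34272%num 256%num (ltac:(by vm_compute)).
have X51 := @g_sub _ _ _ _ W hh DC REP perms 77025%num 470442%num 507375%num 76960%num (ltac:(by vm_compute)).
have X52 := @g_sub _ _ _ _ W hh DC REP perms 4512%num 307648%num 307680%num 4480%num (ltac:(by vm_compute)).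
have X53 := @g_sub _ _ _ _ W hh DC REP perms 5601%num 7488%num 7649%num 5440%num (ltac:(by vm_compute)).
have X54 := @g_sub _ _ _ _ W hh DC REP perms 225%num 10304%num 10465%num 64%num (ltac:(by vm_compute)).
have X55 := @g_sub _ _ _ _ W hh DC REP perms 5345%num 136352%num 136417%num 5280%num (ltac:(by vm_compute)).
have X56 := @g_sub _ _ _ _ W hh DC REP perms 5536%num 38272%num 38304%num 5504%num (ltac:(by vm_compute)).
have X57 := @g_sub _ _ _ _ W hh DC REP perms 5345%num 132160%num 136417%num 1088%num (ltac:(by vm_compute)).
have X58 := @g_sub _ _ _ _ W hh DC REP perms 14560%num 142528%num 146914%num 10432%num (ltac:(by vm_compute)).
have X59 := @g_sub _ _ _ _ W hh DC REP perms 7584%num 70113%num 73185%num 4512%num (ltac:(by vm_compute)).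
have X60 := @g_sub _ _ _ _ W hh DC REP perms 5345%num 132577%num 136673%num 1249%num (ltac:(by vm_compute)).
have X61 := @g_S _ _ _ _ W hh beta perms 32%num Hbe (ltac:(by vm_compute)).
rewrite S24 in X61.
have X62 := @g_sub _ _ _ _ W hh DC REP perms 70881%num 111844%num 111845%num 70880%num (ltac:(by vm_compute)).
have X63 := @g_sub _ _ _ _ W hh DC REP perms 70880%num 99553%num 103649%num 66784%num (ltac:(by vm_compute)).
have X64 := @g_sub _ _ _ _ W hh DC REP perms 5504%num 46208%num 46464%num 5248%num (ltac:(by vm_compute)).
have X65 := @g_sub _ _ _ _ W hh DC REP perms 5345%num 132192%num 136417%num 1120%num (ltac:(by vm_compute)).
have X66 := @g_sub _ _ _ _ W hh DC REP perms 5601%num 38016%num 38369%num 5248%num (ltac:(by vm_compute)).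
have X67 := @g_sub _ _ _ _ W hh DC REP perms 6304%num 268416%num 268448%num 6272%num (ltac:(by vm_compute)).
have X68 := @g_sub _ _ _ _ W hh DC REP perms 13696%num 70113%num 79329%num 4480%num (ltac:(by vm_compute)).
have X69 := @g_sub _ _ _ _ W hh DC REP perms 76001%num 208354%num 208355%num 76000%num (ltac:(by vm_compute)).
have X70 := @g_sub _ _ _ _ W hh DC REP perms 73185%num 81088%num 81377%num 72896%num (ltac:(by vm_compute)).
have X71 := @g_sub _ _ _ _ W hh DC REP perms 225%num 6208%num 6369%num 64%num (ltac:(by vm_compute)).
have X72 := @g_sub _ _ _ _ W hh DC REP perms 225%num 288%num 481%num 32%num (ltac:(by vm_compute)).
have X73 := @g_sub _ _ _ _ W hh DC REP perms 6240%num 48196%num 48228%num 6208%num (ltac:(by vm_compute)).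
have X74 := @g_sub _ _ _ _ W hh DC REP perms 73187%num 179494%num 507375%num 7458%num (ltac:(by vm_compute)).
have X75 := @g_sub _ _ _ _ W hh DC REP perms 74976%num 206016%num 208354%num 74944%num (ltac:(by vm_compute)).
have X76 := @g_sub _ _ _ _ W hh DC REP perms 224%num 9312%num 9440%num 96%num (ltac:(by vm_compute)).
have X77 := @g_sub _ _ _ _ W hh DC REP perms 5345%num 136288%num 136417%num 5216%num (ltac:(by vm_compute)).
have X78 := @g_sub _ _ _ _ W hh DC REP perms 7554%num 15744%num 15746%num 7552%num (ltac:(by vm_compute)).
have X79 := @g_cl _ _ _ _ W hh DC REP perms 1%num 225%num (ltac:(by vm_compute)).
have X80 := @g_W _ _ _ _ W hh alpha perms 1%num Hst (ltac:(by vm_compute)).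
rewrite S24 in X80.
have X81 := @g_sub _ _ _ _ W hh DC REP perms 71137%num 111841%num 112097%num 70881%num (ltac:(by vm_compute)).
have X82 := @g_sub _ _ _ _ W hh DC REP perms 75233%num 111840%num 112097%num 74976%num (ltac:(by vm_compute)).
have X83 := @g_sub _ _ _ _ W hh DC REP perms 14560%num 47200%num 507375%num 14432%num (ltac:(by vm_compute)).
have X84 := @g_sub _ _ _ _ W hh DC REP perms 14784%num 276544%num 276928%num 14400%num (ltac:(by vm_compute)).
have X85 := @g_sub _ _ _ _ W hh DC REP perms 5345%num 132288%num 136417%num 1216%num (ltac:(by vm_compute)).
have X86 := @g_sub _ _ _ _ W hh DC REP perms 5345%num 79008%num 79073%num 5280%num (ltac:(by vm_compute)).
have X87 := @g_sub _ _ _ _ W hh DC REP perms 73187%num 103520%num 507375%num 70752%num (ltac:(by vm_compute)).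
have X88 := @g_sub _ _ _ _ W hh DC REP perms 4512%num 5408%num 5536%num 4384%num (ltac:(by vm_compute)).
have X89 := @g_sub _ _ _ _ W hh DC REP perms 6560%num 276608%num 276896%num 6272%num (ltac:(by vm_compute)).
have X90 := @g_sub _ _ _ _ W hh DC REP perms 6369%num 138432%num 138465%num 6336%num (ltac:(by vm_compute)).
have X91 := @g_sub _ _ _ _ W hh DC REP perms 77283%num 507084%num 507375%num 76992%num (ltac:(by vm_compute)).
have X92 := @g_sub _ _ _ _ W hh DC REP perms 4577%num 138688%num 138721%num 4544%num (ltac:(by vm_compute)).
have X93 := @g_sub _ _ _ _ W hh DC REP perms 14561%num 15584%num 15585%num 14560%num (ltac:(by vm_compute)).
have X94 := @g_sub _ _ _ _ W hh DC REP perms 70881%num 234656%num 234721%num 70816%num (ltac:(by vm_compute)).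
have X95 := @g_sub _ _ _ _ W hh DC REP perms 7651%num 46565%num 507375%num 5601%num (ltac:(by vm_compute)).
have X96 := @g_sub _ _ _ _ W hh DC REP perms 4384%num 8480%num 12576%num 288%num (ltac:(by vm_compute)).
have X97 := @g_sub _ _ _ _ W hh DC REP perms 6560%num 138624%num 138656%num 6528%num (ltac:(by vm_compute)).
have X98 := @g_sub _ _ _ _ W hh DC REP perms 225%num 142626%num 142819%num 32%num (ltac:(by vm_compute)).
have X99 := @g_le _ _ _ _ W hh perms 7393%num 7651%num (ltac:(by vm_compute)).
have X100 := @g_sub _ _ _ _ W hh DC REP perms 7649%num 138465%num 138721%num 7393%num (ltac:(by vm_compute)).
have X101 := @g_sub _ _ _ _ W hh DC REP perms 70880%num 111812%num 111844%num 70848%num (ltac:(by vm_compute)).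
have X102 := @g_sub _ _ _ _ W hh DC REP perms 81379%num 507084%num 507375%num 81088%num (ltac:(by vm_compute)).
have X103 := @g_sub _ _ _ _ W hh DC REP perms 5536%num 46464%num 46496%num 5504%num (ltac:(by vm_compute)).
have X104 := @g_sub _ _ _ _ W hh DC REP perms 225%num 10464%num 10465%num 224%num (ltac:(by vm_compute)).
have X105 := @g_sub _ _ _ _ W hh DC REP perms 70752%num 78912%num 78944%num 70720%num (ltac:(by vm_compute)).
have X106 := @g_sub _ _ _ _ W hh DC REP perms 76257%num 338368%num 338401%num 76224%num (ltac:(by vm_compute)).
have X107 := @g_sub _ _ _ _ W hh DC REP perms 79329%num 208226%num 212451%num 75104%num (ltac:(by vm_compute)).
have X108 := @g_le _ _ _ _ W hh perms 109664%num 109922%num (ltac:(by vm_compute)).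
have X109 := @g_sub _ _ _ _ W hh DC REP perms 225%num 10272%num 10465%num 32%num (ltac:(by vm_compute)).
have X110 := @g_le _ _ _ _ W hh perms 76992%num 212160%num (ltac:(by vm_compute)).
have X111 := @g_sub _ _ _ _ W hh DC REP perms 5601%num 132577%num 136673%num 1505%num (ltac:(by vm_compute)).
have X112 := @g_3 _ _ _ _ W hh DC perms 507375%num (ltac:(by vm_compute)).
rewrite S24 in X112.
have X113 := @g_sub _ _ _ _ W hh DC REP perms 481%num 98688%num 98785%num 384%num (ltac:(by vm_compute)).
have X114 := @g_0 _ _ _ _ W hh perms 0%num (ltac:(by vm_compute)).
have X115 := @g_inv _ _ _ _ W hh perms 64%num 32%num (ltac:(by vm_compute)).
have X116 := @g_inv _ _ _ _ W hh perms 160%num 96%num (ltac:(by vm_compute)).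
have X117 := @g_inv _ _ _ _ W hh perms 256%num 32%num (ltac:(by vm_compute)).
have X118 := @g_inv _ _ _ _ W hh perms 384%num 320%num (ltac:(by vm_compute)).
have X119 := @g_inv _ _ _ _ W hh perms 416%num 352%num (ltac:(by vm_compute)).
have X120 := @g_inv _ _ _ _ W hh perms 1408%num 1184%num (ltac:(by vm_compute)).
have X121 := @g_inv _ _ _ _ W hh perms 2240%num 1216%num (ltac:(by vm_compute)).
have X122 := @g_inv _ _ _ _ W hh perms 4128%num 320%num (ltac:(by vm_compute)).
have X123 := @g_inv _ _ _ _ W hh perms 4544%num 4512%num (ltac:(by vm_compute)).
have X124 := @g_inv _ _ _ _ W hh perms 5408%num 5216%num (ltac:(by vm_compute)).
have X125 := @g_inv _ _ _ _ W hh perms 7200%num 5280%num (ltac:(by vm_compute)).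
have X126 := @g_inv _ _ _ _ W hh perms 7458%num 5345%num (ltac:(by vm_compute)).
have X127 := @g_inv _ _ _ _ W hh perms 8192%num 32%num (ltac:(by vm_compute)).
have X128 := @g_inv _ _ _ _ W hh perms 8224%num 1088%num (ltac:(by vm_compute)).
have X129 := @g_inv _ _ _ _ W hh perms 8480%num 4384%num (ltac:(by vm_compute)).
have X130 := @g_inv _ _ _ _ W hh perms 9312%num 5440%num (ltac:(by vm_compute)).
have X131 := @g_inv _ _ _ _ W hh perms 9440%num 7488%num (ltac:(by vm_compute)).
have X132 := @g_inv _ _ _ _ W hh perms 10272%num 4480%num (ltac:(by vm_compute)).
have X133 := @g_inv _ _ _ _ W hh perms 10304%num 5248%num (ltac:(by vm_compute)).
have X134 := @g_inv _ _ _ _ W hh perms 10400%num 6528%num (ltac:(by vm_compute)).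
have X135 := @g_inv _ _ _ _ W hh perms 10432%num 7296%num (ltac:(by vm_compute)).
have X136 := @g_inv _ _ _ _ W hh perms 10464%num 7552%num (ltac:(by vm_compute)).
have X137 := @g_inv _ _ _ _ W hh perms 10465%num 7554%num (ltac:(by vm_compute)).
have X138 := @g_inv _ _ _ _ W hh perms 12576%num 5440%num (ltac:(by vm_compute)).
have X139 := @g_inv _ _ _ _ W hh perms 14400%num 6240%num (ltac:(by vm_compute)).
have X140 := @g_inv _ _ _ _ W hh perms 14432%num 13696%num (ltac:(by vm_compute)).
have X141 := @g_inv _ _ _ _ W hh perms 15744%num 14560%num (ltac:(by vm_compute)).
have X142 := @g_inv _ _ _ _ W hh perms 15746%num 14561%num (ltac:(by vm_compute)).
have X143 := @g_inv _ _ _ _ W hh perms 15778%num 14817%num (ltac:(by vm_compute)).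
have X144 := @g_inv _ _ _ _ W hh perms 33984%num 6528%num (ltac:(by vm_compute)).
have X145 := @g_inv _ _ _ _ W hh perms 34017%num 7554%num (ltac:(by vm_compute)).
have X146 := @g_inv _ _ _ _ W hh perms 34048%num 1184%num (ltac:(by vm_compute)).
have X147 := @g_inv _ _ _ _ W hh perms 34272%num 14560%num (ltac:(by vm_compute)).
have X148 := @g_inv _ _ _ _ W hh perms 36096%num 1248%num (ltac:(by vm_compute)).
have X149 := @g_inv _ _ _ _ W hh perms 36192%num 14560%num (ltac:(by vm_compute)).
have X150 := @g_inv _ _ _ _ W hh perms 37952%num 4512%num (ltac:(by vm_compute)).
have X151 := @g_inv _ _ _ _ W hh perms 38016%num 6304%num (ltac:(by vm_compute)).
have X152 := @g_inv _ _ _ _ W hh perms 38080%num 6560%num (ltac:(by vm_compute)).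
have X153 := @g_inv _ _ _ _ W hh perms 38272%num 14496%num (ltac:(by vm_compute)).
have X154 := @g_inv _ _ _ _ W hh perms 38304%num 14784%num (ltac:(by vm_compute)).
have X155 := @g_inv _ _ _ _ W hh perms 38368%num 14816%num (ltac:(by vm_compute)).
have X156 := @g_inv _ _ _ _ W hh perms 38369%num 14817%num (ltac:(by vm_compute)).
have X157 := @g_inv _ _ _ _ W hh perms 46208%num 6368%num (ltac:(by vm_compute)).
have X158 := @g_inv _ _ _ _ W hh perms 46464%num 14560%num (ltac:(by vm_compute)).
have X159 := @g_inv _ _ _ _ W hh perms 46496%num 15584%num (ltac:(by vm_compute)).
have X160 := @g_inv _ _ _ _ W hh perms 46500%num 15585%num (ltac:(by vm_compute)).
have X161 := @g_inv _ _ _ _ W hh perms 46565%num 15843%num (ltac:(by vm_compute)).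
have X162 := @g_inv _ _ _ _ W hh perms 47200%num 14560%num (ltac:(by vm_compute)).
have X163 := @g_inv _ _ _ _ W hh perms 48196%num 6625%num (ltac:(by vm_compute)).
have X164 := @g_inv _ _ _ _ W hh perms 48228%num 14817%num (ltac:(by vm_compute)).
have X165 := @g_inv _ _ _ _ W hh perms 66784%num 6368%num (ltac:(by vm_compute)).
have X166 := @g_inv _ _ _ _ W hh perms 67041%num 6625%num (ltac:(by vm_compute)).
have X167 := @g_inv _ _ _ _ W hh perms 68962%num 7586%num (ltac:(by vm_compute)).
have X168 := @g_inv _ _ _ _ W hh perms 69857%num 4577%num (ltac:(by vm_compute)).
have X169 := @g_inv _ _ _ _ W hh perms 74944%num 74912%num (ltac:(by vm_compute)).
have X170 := @g_inv _ _ _ _ W hh perms 76960%num 75200%num (ltac:(by vm_compute)).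
have X171 := @g_inv _ _ _ _ W hh perms 77152%num 76256%num (ltac:(by vm_compute)).
have X172 := @g_inv _ _ _ _ W hh perms 78912%num 70848%num (ltac:(by vm_compute)).
have X173 := @g_inv _ _ _ _ W hh perms 78944%num 75104%num (ltac:(by vm_compute)).
have X174 := @g_inv _ _ _ _ W hh perms 79008%num 75200%num (ltac:(by vm_compute)).
have X175 := @g_inv _ _ _ _ W hh perms 79073%num 75233%num (ltac:(by vm_compute)).
have X176 := @g_inv _ _ _ _ W hh perms 98368%num 5152%num (ltac:(by vm_compute)).
have X177 := @g_inv _ _ _ _ W hh perms 98624%num 70688%num (ltac:(by vm_compute)).
have X178 := @g_inv _ _ _ _ W hh perms 98688%num 70720%num (ltac:(by vm_compute)).
have X179 := @g_inv _ _ _ _ W hh perms 98785%num 70881%num (ltac:(by vm_compute)).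
have X180 := @g_inv _ _ _ _ W hh perms 99553%num 76001%num (ltac:(by vm_compute)).
have X181 := @g_inv _ _ _ _ W hh perms 102432%num 5504%num (ltac:(by vm_compute)).
have X182 := @g_inv _ _ _ _ W hh perms 103456%num 75872%num (ltac:(by vm_compute)).
have X183 := @g_inv _ _ _ _ W hh perms 103520%num 76128%num (ltac:(by vm_compute)).
have X184 := @g_inv _ _ _ _ W hh perms 103649%num 76257%num (ltac:(by vm_compute)).
have X185 := @g_inv _ _ _ _ W hh perms 111748%num 74977%num (ltac:(by vm_compute)).
have X186 := @g_inv _ _ _ _ W hh perms 111780%num 77025%num (ltac:(by vm_compute)).
have X187 := @g_inv _ _ _ _ W hh perms 111812%num 75233%num (ltac:(by vm_compute)).
have X188 := @g_inv _ _ _ _ W hh perms 111840%num 77280%num (ltac:(by vm_compute)).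
have X189 := @g_inv _ _ _ _ W hh perms 111841%num 77281%num (ltac:(by vm_compute)).
have X190 := @g_inv _ _ _ _ W hh perms 111844%num 77281%num (ltac:(by vm_compute)).
have X191 := @g_inv _ _ _ _ W hh perms 111845%num 77283%num (ltac:(by vm_compute)).
have X192 := @g_inv _ _ _ _ W hh perms 112097%num 81377%num (ltac:(by vm_compute)).
have X193 := @g_inv _ _ _ _ W hh perms 113700%num 101730%num (ltac:(by vm_compute)).
have X194 := @g_inv _ _ _ _ W hh perms 131552%num 5344%num (ltac:(by vm_compute)).
have X195 := @g_inv _ _ _ _ W hh perms 132160%num 6272%num (ltac:(by vm_compute)).
have X196 := @g_inv _ _ _ _ W hh perms 132192%num 6528%num (ltac:(by vm_compute)).
have X197 := @g_inv _ _ _ _ W hh perms 132288%num 7296%num (ltac:(by vm_compute)).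
have X198 := @g_inv _ _ _ _ W hh perms 132320%num 7552%num (ltac:(by vm_compute)).
have X199 := @g_inv _ _ _ _ W hh perms 132480%num 5280%num (ltac:(by vm_compute)).
have X200 := @g_inv _ _ _ _ W hh perms 132544%num 7328%num (ltac:(by vm_compute)).
have X201 := @g_inv _ _ _ _ W hh perms 132576%num 7584%num (ltac:(by vm_compute)).
have X202 := @g_inv _ _ _ _ W hh perms 132577%num 7586%num (ltac:(by vm_compute)).
have X203 := @g_inv _ _ _ _ W hh perms 133344%num 7488%num (ltac:(by vm_compute)).
have X204 := @g_inv _ _ _ _ W hh perms 135649%num 70881%num (ltac:(by vm_compute)).
have X205 := @g_inv _ _ _ _ W hh perms 136288%num 75072%num (ltac:(by vm_compute)).
have X206 := @g_inv _ _ _ _ W hh perms 136352%num 75872%num (ltac:(by vm_compute)).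
have X207 := @g_inv _ _ _ _ W hh perms 136416%num 76000%num (ltac:(by vm_compute)).
have X208 := @g_inv _ _ _ _ W hh perms 136417%num 76001%num (ltac:(by vm_compute)).
have X209 := @g_inv _ _ _ _ W hh perms 136544%num 75104%num (ltac:(by vm_compute)).
have X210 := @g_inv _ _ _ _ W hh perms 136608%num 76128%num (ltac:(by vm_compute)).
have X211 := @g_inv _ _ _ _ W hh perms 136640%num 76224%num (ltac:(by vm_compute)).
have X212 := @g_inv _ _ _ _ W hh perms 136672%num 76256%num (ltac:(by vm_compute)).
have X213 := @g_inv _ _ _ _ W hh perms 136673%num 76257%num (ltac:(by vm_compute)).
have X214 := @g_inv _ _ _ _ W hh perms 138432%num 76992%num (ltac:(by vm_compute)).
have X215 := @g_inv _ _ _ _ W hh perms 138464%num 77024%num (ltac:(by vm_compute)).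
have X216 := @g_inv _ _ _ _ W hh perms 138465%num 77025%num (ltac:(by vm_compute)).
have X217 := @g_inv _ _ _ _ W hh perms 138624%num 76000%num (ltac:(by vm_compute)).
have X218 := @g_inv _ _ _ _ W hh perms 138626%num 76001%num (ltac:(by vm_compute)).
have X219 := @g_inv _ _ _ _ W hh perms 138656%num 76256%num (ltac:(by vm_compute)).
have X220 := @g_inv _ _ _ _ W hh perms 138658%num 76257%num (ltac:(by vm_compute)).
have X221 := @g_inv _ _ _ _ W hh perms 138688%num 77024%num (ltac:(by vm_compute)).
have X222 := @g_inv _ _ _ _ W hh perms 138721%num 77281%num (ltac:(by vm_compute)).
have X223 := @g_inv _ _ _ _ W hh perms 139264%num 1088%num (ltac:(by vm_compute)).
have X224 := @g_inv _ _ _ _ W hh perms 142528%num 72896%num (ltac:(by vm_compute)).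
have X225 := @g_inv _ _ _ _ W hh perms 142626%num 70113%num (ltac:(by vm_compute)).
have X226 := @g_inv _ _ _ _ W hh perms 142819%num 73187%num (ltac:(by vm_compute)).
have X227 := @g_inv _ _ _ _ W hh perms 146914%num 81377%num (ltac:(by vm_compute)).
have X228 := @g_inv _ _ _ _ W hh perms 146915%num 81379%num (ltac:(by vm_compute)).
have X229 := @g_inv _ _ _ _ W hh perms 169376%num 105568%num (ltac:(by vm_compute)).
have X230 := @g_inv _ _ _ _ W hh perms 169441%num 109922%num (ltac:(by vm_compute)).
have X231 := @g_inv _ _ _ _ W hh perms 179494%num 73187%num (ltac:(by vm_compute)).
have X232 := @g_inv _ _ _ _ W hh perms 202209%num 80353%num (ltac:(by vm_compute)).
have X233 := @g_inv _ _ _ _ W hh perms 204257%num 81377%num (ltac:(by vm_compute)).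
have X234 := @g_inv _ _ _ _ W hh perms 206016%num 81024%num (ltac:(by vm_compute)).
have X235 := @g_inv _ _ _ _ W hh perms 208226%num 80353%num (ltac:(by vm_compute)).
have X236 := @g_inv _ _ _ _ W hh perms 208354%num 81377%num (ltac:(by vm_compute)).
have X237 := @g_inv _ _ _ _ W hh perms 208355%num 81379%num (ltac:(by vm_compute)).
have X238 := @g_inv _ _ _ _ W hh perms 212096%num 81088%num (ltac:(by vm_compute)).
have X239 := @g_inv _ _ _ _ W hh perms 234656%num 109664%num (ltac:(by vm_compute)).
have X240 := @g_inv _ _ _ _ W hh perms 234721%num 109922%num (ltac:(by vm_compute)).
have X241 := @g_inv _ _ _ _ W hh perms 268416%num 70688%num (ltac:(by vm_compute)).
have X242 := @g_inv _ _ _ _ W hh perms 268448%num 75872%num (ltac:(by vm_compute)).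
have X243 := @g_inv _ _ _ _ W hh perms 268480%num 75072%num (ltac:(by vm_compute)).
have X244 := @g_inv _ _ _ _ W hh perms 269472%num 101472%num (ltac:(by vm_compute)).
have X245 := @g_inv _ _ _ _ W hh perms 276544%num 70816%num (ltac:(by vm_compute)).
have X246 := @g_inv _ _ _ _ W hh perms 276608%num 72736%num (ltac:(by vm_compute)).
have X247 := @g_inv _ _ _ _ W hh perms 276896%num 109664%num (ltac:(by vm_compute)).
have X248 := @g_inv _ _ _ _ W hh perms 276928%num 105568%num (ltac:(by vm_compute)).
have X249 := @g_inv _ _ _ _ W hh perms 303520%num 76992%num (ltac:(by vm_compute)).
have X250 := @g_inv _ _ _ _ W hh perms 303585%num 77025%num (ltac:(by vm_compute)).
have X251 := @g_inv _ _ _ _ W hh perms 307648%num 76256%num (ltac:(by vm_compute)).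
have X252 := @g_inv _ _ _ _ W hh perms 307680%num 77280%num (ltac:(by vm_compute)).
have X253 := @g_inv _ _ _ _ W hh perms 310598%num 73187%num (ltac:(by vm_compute)).
have X254 := @g_inv _ _ _ _ W hh perms 338016%num 101472%num (ltac:(by vm_compute)).
have X255 := @g_inv _ _ _ _ W hh perms 338145%num 101730%num (ltac:(by vm_compute)).
have X256 := @g_inv _ _ _ _ W hh perms 338368%num 109664%num (ltac:(by vm_compute)).
have X257 := @g_inv _ _ _ _ W hh perms 338401%num 109922%num (ltac:(by vm_compute)).
have X258 := @g_inv _ _ _ _ W hh perms 459816%num 7554%num (ltac:(by vm_compute)).
have X259 := @g_inv _ _ _ _ W hh perms 470442%num 81379%num (ltac:(by vm_compute)).
have X260 := @g_inv _ _ _ _ W hh perms 507084%num 212451%num (ltac:(by vm_compute)).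
have X261 := @g_ge0 _ _ _ _ W hh perms 32%num.
have X262 := @g_ge0 _ _ _ _ W hh perms 96%num.
have X263 := @g_ge0 _ _ _ _ W hh perms 224%num.
have X264 := @g_ge0 _ _ _ _ W hh perms 225%num.
have X265 := @g_ge0 _ _ _ _ W hh perms 288%num.
have X266 := @g_ge0 _ _ _ _ W hh perms 320%num.
have X267 := @g_ge0 _ _ _ _ W hh perms 352%num.
have X268 := @g_ge0 _ _ _ _ W hh perms 480%num.
have X269 := @g_ge0 _ _ _ _ W hh perms 481%num.
have X270 := @g_ge0 _ _ _ _ W hh perms 1088%num.
have X271 := @g_ge0 _ _ _ _ W hh perms 1120%num.
have X272 := @g_ge0 _ _ _ _ W hh perms 1184%num.
have X273 := @g_ge0 _ _ _ _ W hh perms 1216%num.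
have X274 := @g_ge0 _ _ _ _ W hh perms 1248%num.
have X275 := @g_ge0 _ _ _ _ W hh perms 1249%num.
have X276 := @g_ge0 _ _ _ _ W hh perms 1472%num.
have X277 := @g_ge0 _ _ _ _ W hh perms 1504%num.
have X278 := @g_ge0 _ _ _ _ W hh perms 1505%num.
have X279 := @g_ge0 _ _ _ _ W hh perms 4384%num.
have X280 := @g_ge0 _ _ _ _ W hh perms 4480%num.
have X281 := @g_ge0 _ _ _ _ W hh perms 4512%num.
have X282 := @g_ge0 _ _ _ _ W hh perms 4577%num.
have X283 := @g_ge0 _ _ _ _ W hh perms 5152%num.
have X284 := @g_ge0 _ _ _ _ W hh perms 5216%num.
have X285 := @g_ge0 _ _ _ _ W hh perms 5248%num.
have X286 := @g_ge0 _ _ _ _ W hh perms 5280%num.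
have X287 := @g_ge0 _ _ _ _ W hh perms 5344%num.
have X288 := @g_ge0 _ _ _ _ W hh perms 5345%num.
have X289 := @g_ge0 _ _ _ _ W hh perms 5440%num.
have X290 := @g_ge0 _ _ _ _ W hh perms 5504%num.
have X291 := @g_ge0 _ _ _ _ W hh perms 5536%num.
have X292 := @g_ge0 _ _ _ _ W hh perms 5600%num.
have X293 := @g_ge0 _ _ _ _ W hh perms 5601%num.
have X294 := @g_ge0 _ _ _ _ W hh perms 6208%num.
have X295 := @g_ge0 _ _ _ _ W hh perms 6240%num.
have X296 := @g_ge0 _ _ _ _ W hh perms 6272%num.
have X297 := @g_ge0 _ _ _ _ W hh perms 6304%num.
have X298 := @g_ge0 _ _ _ _ W hh perms 6336%num.
have X299 := @g_ge0 _ _ _ _ W hh perms 6368%num.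
have X300 := @g_ge0 _ _ _ _ W hh perms 6369%num.
have X301 := @g_ge0 _ _ _ _ W hh perms 6528%num.
have X302 := @g_ge0 _ _ _ _ W hh perms 6560%num.
have X303 := @g_ge0 _ _ _ _ W hh perms 6625%num.
have X304 := @g_ge0 _ _ _ _ W hh perms 7296%num.
have X305 := @g_ge0 _ _ _ _ W hh perms 7328%num.
have X306 := @g_ge0 _ _ _ _ W hh perms 7360%num.
have X307 := @g_ge0 _ _ _ _ W hh perms 7393%num.
have X308 := @g_ge0 _ _ _ _ W hh perms 7488%num.
have X309 := @g_ge0 _ _ _ _ W hh perms 7552%num.
have X310 := @g_ge0 _ _ _ _ W hh perms 7554%num.
have X311 := @g_ge0 _ _ _ _ W hh perms 7584%num.
have X312 := @g_ge0 _ _ _ _ W hh perms 7586%num.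
have X313 := @g_ge0 _ _ _ _ W hh perms 7649%num.
have X314 := @g_ge0 _ _ _ _ W hh perms 7651%num.
have X315 := @g_ge0 _ _ _ _ W hh perms 13696%num.
have X316 := @g_ge0 _ _ _ _ W hh perms 14496%num.
have X317 := @g_ge0 _ _ _ _ W hh perms 14560%num.
have X318 := @g_ge0 _ _ _ _ W hh perms 14561%num.
have X319 := @g_ge0 _ _ _ _ W hh perms 14784%num.
have X320 := @g_ge0 _ _ _ _ W hh perms 14816%num.
have X321 := @g_ge0 _ _ _ _ W hh perms 14817%num.
have X322 := @g_ge0 _ _ _ _ W hh perms 15584%num.
have X323 := @g_ge0 _ _ _ _ W hh perms 15585%num.
have X324 := @g_ge0 _ _ _ _ W hh perms 15843%num.
have X325 := @g_ge0 _ _ _ _ W hh perms 70113%num.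
have X326 := @g_ge0 _ _ _ _ W hh perms 70688%num.
have X327 := @g_ge0 _ _ _ _ W hh perms 70720%num.
have X328 := @g_ge0 _ _ _ _ W hh perms 70752%num.
have X329 := @g_ge0 _ _ _ _ W hh perms 70816%num.
have X330 := @g_ge0 _ _ _ _ W hh perms 70848%num.
have X331 := @g_ge0 _ _ _ _ W hh perms 70880%num.
have X332 := @g_ge0 _ _ _ _ W hh perms 70881%num.
have X333 := @g_ge0 _ _ _ _ W hh perms 71137%num.
have X334 := @g_ge0 _ _ _ _ W hh perms 72736%num.
have X335 := @g_ge0 _ _ _ _ W hh perms 72896%num.
have X336 := @g_ge0 _ _ _ _ W hh perms 73185%num.
have X337 := @g_ge0 _ _ _ _ W hh perms 73187%num.
have X338 := @g_ge0 _ _ _ _ W hh perms 74912%num.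
have X339 := @g_ge0 _ _ _ _ W hh perms 74976%num.
have X340 := @g_ge0 _ _ _ _ W hh perms 74977%num.
have X341 := @g_ge0 _ _ _ _ W hh perms 75072%num.
have X342 := @g_ge0 _ _ _ _ W hh perms 75104%num.
have X343 := @g_ge0 _ _ _ _ W hh perms 75200%num.
have X344 := @g_ge0 _ _ _ _ W hh perms 75233%num.
have X345 := @g_ge0 _ _ _ _ W hh perms 75872%num.
have X346 := @g_ge0 _ _ _ _ W hh perms 76000%num.
have X347 := @g_ge0 _ _ _ _ W hh perms 76001%num.
have X348 := @g_ge0 _ _ _ _ W hh perms 76128%num.
have X349 := @g_ge0 _ _ _ _ W hh perms 76224%num.
have X350 := @g_ge0 _ _ _ _ W hh perms 76256%num.
have X351 := @g_ge0 _ _ _ _ W hh perms 76257%num.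
have X352 := @g_ge0 _ _ _ _ W hh perms 76992%num.
have X353 := @g_ge0 _ _ _ _ W hh perms 77024%num.
have X354 := @g_ge0 _ _ _ _ W hh perms 77025%num.
have X355 := @g_ge0 _ _ _ _ W hh perms 77280%num.
have X356 := @g_ge0 _ _ _ _ W hh perms 77281%num.
have X357 := @g_ge0 _ _ _ _ W hh perms 77283%num.
have X358 := @g_ge0 _ _ _ _ W hh perms 79329%num.
have X359 := @g_ge0 _ _ _ _ W hh perms 80353%num.
have X360 := @g_ge0 _ _ _ _ W hh perms 81024%num.
have X361 := @g_ge0 _ _ _ _ W hh perms 81088%num.
have X362 := @g_ge0 _ _ _ _ W hh perms 81377%num.
have X363 := @g_ge0 _ _ _ _ W hh perms 81379%num.
have X364 := @g_ge0 _ _ _ _ W hh perms 101472%num.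
have X365 := @g_ge0 _ _ _ _ W hh perms 101730%num.
have X366 := @g_ge0 _ _ _ _ W hh perms 105568%num.
have X367 := @g_ge0 _ _ _ _ W hh perms 109664%num.
have X368 := @g_ge0 _ _ _ _ W hh perms 109922%num.
have X369 := @g_ge0 _ _ _ _ W hh perms 212160%num.
have X370 := @g_ge0 _ _ _ _ W hh perms 212451%num.
have X371 := @g_ge0 _ _ _ _ W hh perms 507375%num.
lra.
Qed.
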